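(* For any $s\in\mathcal S=\{s\in\mathbb R^b:1\ge s_1\ge\cdots\ge s_b\ge0\}$, the matrix $J(s)$ is invertible.
   Context: Let $b\ge1$ be an integer and $\lambda=1-\gamma/N^{\alpha}$ with $N\ge1$, $\gamma\in(0,1]$, $\alpha>0$ (so $0\le\lambda<1$). $J(s)$ is the $b\times b$ tridiagonal matrix (the Jacobian of the mean-field vector field $f_k(s)=\lambda(s_{k-1}^2-s_k^2)-(s_k-s_{k+1})$, $s_0=1$, $s_{b+1}=0$) with diagonal entries $J_{kk}=-2\lambda s_k-1$ ($k=1,\dots,b$), superdiagonal entries $J_{k,k+1}=1$ and subdiagonal entries $J_{k+1,k}=2\lambda s_k$ ($k=1,\dots,b-1$). *)

(* Defs.v *)
From HB Require Import structures.
From mathcomp Require Import all_boot all_order all_algebra.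
From mathcomp Require Import all_classical all_reals all_analysis.
Set Implicit Arguments. Unset Strict Implicit. Unset Printing Implicit Defensive.
Import Order.TTheory GRing.Theory Num.Theory.
Local Open Scope ring_scope.

(* Indices are 0-based: paper index k corresponds to i : 'I_b with val i = k-1. *)

Definition lam {R : realType} (N : nat) (gamma alpha : R) : R :=
  1 - gamma / (N%:R `^ alpha).

Definition Jmat {R : realType} (b : nat) (l : R) (s : 'I_b -> R) : 'M[R]_b :=
  \matrix_(i < b, j < b)
    (if val i == val j then - (2 * l * s i) - 1
     else if (val j == (val i).+1)%N then 1
     else if (val i == (val j).+1)%N then 2 * l * s j
     else 0).

Definition inS {R : realType} (b : nat) (s : 'I_b -> R) : Prop :=
  (forall i : 'I_b, 0 <= s i <= 1) /\
  (forall i j : 'I_b, (val i <= val j)%N -> s j <= s i).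

(* Main.v *)
Require Import Defs.
From HB Require Import structures.
From mathcomp Require Import all_boot all_order all_algebra.
From mathcomp Require Import all_classical all_reals all_analysis.
From mathcomp Require Import zify ring lra.
Import Order.TTheory GRing.Theory Num.Theory.
Local Open Scope ring_scope.

Ltac fb e := let H := fresh in (have H : e = false by apply/eqP; lia); rewrite ?H.

Lemma sum_ind1 (R : realType) (n c : nat) (F : nat -> R) :
  \sum_(0 <= k < n) (if k == c then F k else 0) = if (c < n)%N then F c else 0.
Proof.
elim: n => [|n IH]; first by rewrite big_geq.
rewrite big_nat_recr //= IH.
case: (ltngtP c n) => h.
- have -> : (c < n.+1)%N by lia.
  by rewrite addr0.
- have -> : (c < n.+1)%N = false by lia.
  by rewrite addr0.
- by rewrite h ltnSn add0r.
Qed.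

Lemma lam_ge0 (R : realType) (N : nat) (gamma alpha : R) :
  (1 <= N)%N -> 0 < gamma <= 1 -> 0 < alpha -> 0 <= lam N gamma alpha.
Proof.
move=> hN /andP[g0 g1] ha.
have h1 : 1 <= N%:R `^ alpha :> R.
  have hN1 : 1 <= N%:R :> R by rewrite ler1n.
  by have := @ler_powR R N%:R hN1 0 alpha (ltW ha); rewrite powRr0.
rewrite /lam subr_ge0 ler_pdivrMr ?mul1r; last by apply: lt_le_trans h1.
exact: le_trans g1 h1.
Qed.

Theorem lemma4 (R : realType) (b N : nat) (gamma alpha : R)
  (hb : (1 <= b)%N) (hN : (1 <= N)%N)
  (hg : 0 < gamma <= 1) (ha : 0 < alpha)
  (s : 'I_b -> R) (hs : inS s) :
  Jmat (lam N gamma alpha) s \in unitmx.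
Proof.
have l0 := @lam_ge0 R N gamma alpha hN hg ha.
move: (lam N gamma alpha) l0 => l l0.
case: b hb s hs => // b _ s [hs _].
rewrite unitmxE unitfE -det_tr; apply/negP => /det0P [v vn0 hv].
pose n := b.+1.
pose vn (k : nat) := if (k < n)%N then v 0 (inord k) else 0.
pose sn (k : nat) := s (inord k).
have sn0 k : 0 <= sn k by case/andP: (hs (inord k)).
have row j : (j < n)%N ->
   (if (0 < j)%N then 2 * l * sn j.-1 * vn j.-1 else 0)
   - (2 * l * sn j + 1) * vn j + vn j.+1 = 0.
  move=> hj.
  pose G k := vn k * (if j == k then - (2 * l * sn j) - 1
     else if (k == j.+1)%N then 1
     else if (j == k.+1)%N then 2 * l * sn k
     else 0).
  have := hv; move/rowP => /(_ (inord j)).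
  rewrite !mxE /= => hsum; apply: (etrans _ hsum).
  rewrite (eq_bigr (fun i : 'I_n => G (val i))); last first.
    move=> i _; rewrite !mxE /= inordK // /G /vn /sn ltn_ord !inord_val.
    case: eqP => [->|]; first by rewrite inord_val.
    done.
  rewrite -(big_mkord xpredT G).
  have eG k : G k = (if k == j.-1 then (if (0 < j)%N then 2 * l * sn k * vn k else 0) else 0)
     + (if k == j then - ((2 * l * sn j + 1) * vn k) else 0)
     + (if k == j.+1 then vn k else 0).
    rewrite /G.
    case: (ltngtP j k) => h.
    - fb (k == j.-1).
      fb (j == k).
      fb (k == j).
      fb (j == k.+1).
      by case: eqP => _; rewrite ?mulr1 ?mulr0; ring.
    - fb (j == k).
      fb (k == j).
      fb (k == j.+1).
      case: (boolP (j == k.+1)) => e.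
      + have -> : k == j.-1 by apply/eqP; lia.
        have -> : (0 < j)%N by lia.
        ring.
      + fb (k == j.-1).
        by rewrite mulr0; ring.
    - rewrite -h.
      fb (j == j.+1).
      case: (boolP (j == j.-1)) => e.
      + have -> : (0 < j)%N = false by lia.
        ring.
      + ring.
  symmetry.
  rewrite (eq_bigr _ (fun k _ => eG k)) !big_split /= !sum_ind1.
  have -> : (j < n)%N by [].
  case: (boolP (0 < j)%N) => j0.
  - have -> : (j.-1 < n)%N by lia.
    case: (boolP (j.+1 < n)%N) => j1 //.
    by rewrite /vn (negPf j1); ring.
  - have -> : (j.-1 < n)%N by lia.
    case: (boolP (j.+1 < n)%N) => j1 //.
    by rewrite /vn (negPf j1); ring.
pose c := fix c (k : nat) : R := if k is k'.+1 then 1 + 2 * l * sn k' * c k' else 1.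
have c1 k : 1 <= c k.
  elim: k => [|k IH] /=; first by [].
  have : 0 <= 2 * l * sn k * c k.
    by rewrite !mulr_ge0 // ?(le_trans _ IH).
  lra.
have P k : (k < n)%N -> vn k = c k * vn 0 /\ vn k.+1 = c k.+1 * vn 0.
  elim: k => [|k IH] hk.
    split; first by rewrite /= mul1r.
    have := row 0%N hk; rewrite /= => h.
    have e : vn 1%N = (2 * l * sn 0%N + 1) * vn 0%N by lra.
    rewrite e; ring.
  have [IH1 IH2] := IH (ltnW hk).
  split => //.
  have := row k.+1 hk; rewrite /= IH1 IH2 /= => h.
  have e : vn k.+2 = (2 * l * sn k.+1 + 1) * ((1 + 2 * l * sn k * c k) * vn 0%N)
      - 2 * l * sn k * (c k * vn 0%N) by lra.
  rewrite e /=; ring.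
have v00 : vn 0%N = 0.
  have [_ h] := P b (ltnSn b).
  have hn : vn n = 0 by rewrite /vn ltnn.
  move: h; rewrite hn => h.
  have := c1 n.
  move: h; set C := c n => h hC.
  apply/eqP; move/eqP: h; rewrite eq_sym mulf_eq0 => /orP[/eqP|/eqP //].
  lra.
move/eqP: vn0; apply; apply/rowP => i.
have := (P (val i) (ltn_ord i)).1.
rewrite v00 mulr0 /vn ltn_ord inord_val => ->.
by rewrite mxE.
Qed.
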